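(* Let $M$ be an $n\times n$ primitive Boolean matrix with Boolean rank $b(M)=2$. Then $k(M)=2$ if and only if $M$ has a Boolean rank factorization $M=AB$ (with $A$ an $n\times 2$ and $B$ a $2\times n$ Boolean matrix) such that: (i) $BA=W_2$ or $BA=J_2$, where $W_2=\left[\begin{array}{cc}1&1\\1&0\end{array}\right]$ and $J_2=\left[\begin{array}{cc}1&1\\1&1\end{array}\right]$; (ii) some row of $A$ equals $e_1^t(2)$ and some row of $A$ equals $e_2^t(2)$; (iii) no column of $B$ equals $e_1(2)+e_2(2)$.
   Context: Boolean matrices are $(0,1)$-matrices with Boolean arithmetic ($1+1=1$). A square Boolean matrix is primitive if some power has all entries $1$; its scrambling index $k(M)$ is the smallest positive integer $k$ such that any two rows of $M^k$ have a $1$ in a common position (equivalently $M^k(M^t)^k=J$). The Boolean rank $b(M)$ is the smallest $b$ with $M=AB$, $A$ of size $n\times b$ and $B$ of size $b\times n$ Boolean; such a factorization is a Boolean rank factorization. $e_i(2)$ denotes the $i$th column of the $2\times 2$ identity matrix. *)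

(* Defs.v *)
From mathcomp Require Import all_boot all_algebra.
Set Implicit Arguments. Unset Strict Implicit. Unset Printing Implicit Defensive.

Definition bmul (m n p : nat) (A : 'M[bool]_(m, n)) (B : 'M[bool]_(n, p))
  : 'M[bool]_(m, p) := \matrix_(i, j) [exists k, A i k && B k j].

Definition bone (n : nat) : 'M[bool]_n := \matrix_(i, j) (i == j).
Definition ball (m n : nat) : 'M[bool]_(m, n) := const_mx true.

Fixpoint bpow (n : nat) (M : 'M[bool]_n) (k : nat) : 'M[bool]_n :=
  if k is k'.+1 then bmul (bpow M k') M else bone n.

Definition bool_primitive (n : nat) (M : 'M[bool]_n) : Prop :=
  exists k, bpow M k = ball n n.

Definition scrambling_at (n : nat) (M : 'M[bool]_n) (k : nat) : Prop :=
  forall i j : 'I_n, exists l : 'I_n, bpow M k i l && bpow M k j l.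

Definition is_scrambling_index (n : nat) (M : 'M[bool]_n) (k : nat) : Prop :=
  (0 < k)%N /\ scrambling_at M k /\
  (forall k', (0 < k')%N -> (k' < k)%N -> ~ scrambling_at M k').

Definition has_bool_factorization (m n : nat) (M : 'M[bool]_(m, n)) (b : nat) : Prop :=
  exists (A : 'M[bool]_(m, b)) (B : 'M[bool]_(b, n)), M = bmul A B.

Definition is_bool_rank (m n : nat) (M : 'M[bool]_(m, n)) (b : nat) : Prop :=
  has_bool_factorization M b /\ (forall b', (b' < b)%N -> ~ has_bool_factorization M b').

Definition W2 : 'M[bool]_2 := \matrix_(i, j) ~~ ((i == 1 :> nat) && (j == 1 :> nat)).
Definition J2 : 'M[bool]_2 := ball 2 2.

(* e_i(2): the i-th column of the 2x2 identity, i = 1 or 2 (1-based as in the paper) *)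
Definition e2 (i : nat) : 'cV[bool]_2 := \col_j (j.+1 == i).
Definition e2t (i : nat) : 'rV[bool]_2 := \row_j (j.+1 == i).
Definition e2sum : 'cV[bool]_2 := \col_j (e2 1 j ord0 || e2 2 j ord0).

(* Main.v *)
Require Import Defs.
From mathcomp Require Import all_boot all_algebra.
Set Implicit Arguments. Unset Strict Implicit. Unset Printing Implicit Defensive.

Lemma bmulE m n p (A : 'M[bool]_(m,n)) (B : 'M[bool]_(n,p)) i j :
  bmul A B i j = [exists k, A i k && B k j].
Proof. by rewrite /bmul mxE. Qed.

Lemma bmulA m n p q (A : 'M[bool]_(m,n)) (B : 'M[bool]_(n,p)) (C : 'M[bool]_(p,q)) :
  bmul (bmul A B) C = bmul A (bmul B C).
Proof.
apply/matrixP=> i j; rewrite !bmulE.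
apply/existsP/existsP=> [[k /andP[]]|[m' /andP[h1]]].
- rewrite bmulE => /existsP[m' /andP[h1 h2]] h3.
  by exists m'; rewrite h1 /= bmulE; apply/existsP; exists k; rewrite h2 h3.
- rewrite bmulE => /existsP[k /andP[h2 h3]].
  by exists k; rewrite h3 andbT bmulE; apply/existsP; exists m'; rewrite h1 h2.
Qed.

Lemma bmul1 n p (M : 'M[bool]_(n,p)) : bmul (bone n) M = M.
Proof.
apply/matrixP=> i j; rewrite bmulE; apply/existsP/idP=> [[k]|h].
- by rewrite mxE => /andP[/eqP-> ->].
- by exists i; rewrite mxE eqxx.
Qed.

Lemma bmulr1 n p (M : 'M[bool]_(p,n)) : bmul M (bone n) = M.
Proof.
apply/matrixP=> i j; rewrite bmulE; apply/existsP/idP=> [[k]|h].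
- by rewrite mxE => /andP[h /eqP <-].
- by exists j; rewrite mxE eqxx andbT.
Qed.

Lemma bpowS' n (M : 'M[bool]_n) k : bpow M k.+1 = bmul M (bpow M k).
Proof.
elim: k => [|k IH].
  by rewrite (_ : bpow M 1 = bmul (bone n) M) // (_ : bpow M 0 = bone n) // bmul1 bmulr1.
rewrite (_ : bpow M k.+2 = bmul (bpow M k.+1) M) // IH bmulA; congr bmul.
by rewrite -IH.
Qed.

Lemma bpow1 n (M : 'M[bool]_n) : bpow M 1 = M.
Proof. by rewrite (_ : bpow M 1 = bmul (bone n) M) // bmul1. Qed.
Lemma bpow2 n (M : 'M[bool]_n) : bpow M 2 = bmul M M.
Proof. by rewrite (_ : bpow M 2 = bmul (bpow M 1) M) // bpow1. Qed.

Definition o0 : 'I_2 := ord0.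
Definition o1 : 'I_2 := ord_max.

Lemma I2 (p : 'I_2) : p = o0 \/ p = o1.
Proof. by case: p => [[|[|//]] Hp]; [left|right]; apply: val_inj. Qed.

Lemma ex2 (f : 'I_2 -> bool) : [exists p, f p] = f o0 || f o1.
Proof.
apply/existsP/orP => [[p]|[h|h]]; last 2 first.
- by exists o0. - by exists o1.
by case: (I2 p) => ->; [left|right].
Qed.

Lemma rev0 : rev_ord o0 = o1. Proof. exact: val_inj. Qed.
Lemma rev1 : rev_ord o1 = o0. Proof. exact: val_inj. Qed.

Lemma prim_row n (M : 'M[bool]_n) (i0 j0 : 'I_n) : i0 != j0 -> bool_primitive M ->
  forall i, exists m, M i m.
Proof.
move=> ne [[|k] H] i.
- have := congr1 (fun X : 'M[bool]_n => X i0 j0) H; rewrite /= !mxE (negbTE ne) //.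
- have : bpow M k.+1 i i = true by rewrite H mxE.
  by rewrite bpowS' bmulE => /existsP[m /andP[h _]]; exists m.
Qed.

Definition swA n (A : 'M[bool]_(n,2)) : 'M[bool]_(n,2) := \matrix_(i,j) A i (rev_ord j).
Definition swB n (B : 'M[bool]_(2,n)) : 'M[bool]_(2,n) := \matrix_(i,j) B (rev_ord i) j.

Lemma sw_mul n (A : 'M[bool]_(n,2)) (B : 'M[bool]_(2,n)) : bmul (swA A) (swB B) = bmul A B.
Proof. by apply/matrixP=> i j; rewrite !bmulE !ex2 !mxE rev0 rev1 orbC. Qed.

Lemma sw_mul' n (A : 'M[bool]_(n,2)) (B : 'M[bool]_(2,n)) i j :
  bmul (swB B) (swA A) i j = bmul B A (rev_ord i) (rev_ord j).
Proof. by rewrite !bmulE; apply: eq_existsb => k; rewrite !mxE. Qed.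

Definition good n (M : 'M[bool]_n) (A : 'M[bool]_(n,2)) (B : 'M[bool]_(2,n)) (i0 j0 : 'I_n) :=
  [/\ M = bmul A B, A i0 o0 && ~~ A i0 o1, ~~ A j0 o0 && A j0 o1,
      forall l, ~~ (B o0 l && B o1 l) & (exists l, B o0 l) /\ (exists l, B o1 l)].

Lemma good_sw n (M : 'M[bool]_n) A B i0 j0 : good M A B i0 j0 -> good M (swA A) (swB B) j0 i0.
Proof.
case=> EM /andP[a0 a1] /andP[b0 b1] dis [[l1 h1] [l2 h2]]; split.
- by rewrite sw_mul.
- by rewrite !mxE rev0 rev1 b0 b1.
- by rewrite !mxE rev0 rev1 a0 a1.
- by move=> l; rewrite !mxE rev0 rev1 andbC.
- by split; [exists l2|exists l1]; rewrite mxE ?rev0 ?rev1.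
Qed.

Lemma good_rows n (M : 'M[bool]_n) A B i0 j0 : good M A B i0 j0 ->
  (forall l, M i0 l = B o0 l) /\ (forall l, M j0 l = B o1 l).
Proof.
case=> EM /andP[a0 a1] /andP[b0 b1] _ _; split=> l;
by rewrite EM bmulE ex2 ?a0 ?b1 ?(negbTE a1) ?(negbTE b0) /= ?orbF.
Qed.

Lemma good_ne n (M : 'M[bool]_n) A B i0 j0 : good M A B i0 j0 -> i0 != j0.
Proof. by case=> _ /andP[a0 _] /andP[b0 _] _ _; apply: contraNneq b0 => <-. Qed.

Lemma step1 n (M : 'M[bool]_n) A B i0 j0 : good M A B i0 j0 -> scrambling_at M 2 ->
  exists p, bmul B A o0 p && bmul B A o1 p.
Proof.
move=> G /(_ i0 j0) [l]; have [R0 R1] := good_rows G.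
case: G => EM _ _ dis _.
rewrite bpow2 !bmulE => /andP[/existsP[k1 /andP[h1 h1']] /existsP[k2 /andP[h2 h2']]].
rewrite R0 in h1; rewrite R1 in h2.
rewrite EM bmulE in h1'; rewrite EM bmulE in h2'.
case/existsP: h1' => p /andP[hp1 hp2]; case/existsP: h2' => q /andP[hq1 hq2].
have pq : p = q.
  case: (I2 p) (I2 q) hp2 hq2 => -> [] -> // hp hq; by have := dis l; rewrite hp hq.
subst q; exists p; rewrite !bmulE; apply/andP; split; apply/existsP.
- by exists k1; rewrite h1 hp1.
- by exists k2; rewrite h2 hq1.
Qed.

Lemma step2 n (M : 'M[bool]_n) A B i0 j0 : good M A B i0 j0 -> bool_primitive M ->
  bmul B A o0 o0 -> bmul B A o0 o1.
Proof.
move=> G [k Hk] c00; apply/negP => c01.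
have ne := good_ne G; have [R0 R1] := good_rows G.
case: G => EM _ _ dis [_ [l2 hl2]].
have key : forall k l, bpow M k.+1 i0 l = B o0 l.
  elim=> [|k' IH] l; first by rewrite bpow1 R0.
  rewrite (_ : bpow M k'.+2 = bmul (bpow M k'.+1) M) // bmulE.
  apply/existsP/idP => [[m /andP[]]|h].
  - rewrite IH EM bmulE => hm /existsP[q /andP[hq1 hq2]].
    case: (I2 q) hq1 hq2 => -> // hq1 _; case: c01.
    by rewrite bmulE; apply/existsP; exists m; rewrite hm hq1.
  - move: c00; rewrite bmulE => /existsP[m /andP[h1 h2]].
    by exists m; rewrite IH h1 EM bmulE; apply/existsP; exists o0; rewrite h2 h.
case: k Hk => [|k] Hk.
- have := congr1 (fun X : 'M[bool]_n => X i0 j0) Hk; rewrite /= !mxE (negbTE ne) //.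
- have := congr1 (fun X : 'M[bool]_n => X i0 l2) Hk; rewrite key mxE.
  by have := dis l2; rewrite hl2 andbT => /negbTE ->.
Qed.

Lemma final n (M : 'M[bool]_n) (A : 'M[bool]_(n,2)) (B : 'M[bool]_(2,n)) i0 j0 : good M A B i0 j0 ->
  bmul B A o0 o0 -> bmul B A o1 o0 -> bmul B A o0 o1 ->
   exists (A : 'M[bool]_(n, 2)) (B : 'M[bool]_(2, n)),
     M = bmul A B /\
     (bmul B A = W2 \/ bmul B A = J2) /\
     (exists i : 'I_n, row i A = e2t 1) /\
     (exists i : 'I_n, row i A = e2t 2) /\
     (forall j : 'I_n, col j B <> e2sum).
Proof.
case=> EM /andP[a0 a1] /andP[b0 b1] dis _ c00 c10 c01.
exists A, B; split=> //; split.
  case c11: (bmul B A o1 o1); [right|left]; apply/matrixP=> i j;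
  by case: (I2 i) (I2 j) => -> [] ->; rewrite /W2 /J2 /ball [RHS]mxE /= ?c00 ?c10 ?c01 ?c11.
split; first by exists i0; apply/rowP => j; rewrite !mxE; case: (I2 j) => -> /=; rewrite ?a0 ?(negbTE a1).
split; first by exists j0; apply/rowP => j; rewrite !mxE; case: (I2 j) => -> /=; rewrite ?b1 ?(negbTE b0).
move=> j /matrixP H; have h0 := H o0 ord0; have h1 := H o1 ord0.
rewrite !mxE /= in h0 h1; by move: (dis j); rewrite h0 h1.
Qed.

Lemma mk n (M : 'M[bool]_n) (A : 'M[bool]_(n,2)) (B : 'M[bool]_(2,n)) i0 j0 k1 k2 : M = bmul A B ->
  A i0 o0 -> ~~ A i0 o1 -> ~~ A j0 o0 -> A j0 o1 -> B o0 k1 -> B o1 k2 ->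
  (forall l, ~~ (M i0 l && M j0 l)) -> good M A B i0 j0.
Proof.
move=> EM a0 a1 b0 b1 h1 h2 dis; split=> //; rewrite ?a0 ?b1 ?a1 ?b0 //.
- move=> l; apply/negP => /andP[x y]; move: (dis l); rewrite EM !bmulE !ex2.
  by rewrite a0 b1 x y !orbT.
- by split; [exists k1|exists k2].
Qed.

Lemma step0 n (M : 'M[bool]_n) (A : 'M[bool]_(n,2)) (B : 'M[bool]_(2,n)) i0 j0 k1 k2 : M = bmul A B ->
  (forall l, ~~ (M i0 l && M j0 l)) -> M i0 k1 -> M j0 k2 ->
  exists A' B', good M A' B' i0 j0.
Proof.
move=> EM dis m1 m2.
have e1 := m1; have e2 := m2.
rewrite EM bmulE in e1; rewrite EM bmulE in e2.
case/existsP: e1 => p1 /andP[x1 y1]; case/existsP: e2 => p2 /andP[x2 y2].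
have n1 : ~~ A j0 p1.
  apply/negP => h; move: (dis k1); rewrite m1 /= EM bmulE.
  by apply/negP; rewrite negbK; apply/existsP; exists p1; rewrite h y1.
have n2 : ~~ A i0 p2.
  apply/negP => h; move: (dis k2); rewrite m2 andbT EM bmulE.
  by apply/negP; rewrite negbK; apply/existsP; exists p2; rewrite h y2.
case: (I2 p1) (I2 p2) x1 y1 n1 x2 y2 n2 => -> [] -> x1 y1 n1 x2 y2 n2.
- by rewrite x1 in n2.
- by exists A, B; apply: (mk (k1:=k1) (k2:=k2)).
- exists (swA A), (swB B); apply: (mk (k1:=k1) (k2:=k2)); rewrite ?sw_mul ?mxE ?rev0 ?rev1 //.
- by rewrite x1 in n2.
Qed.

Theorem theorem2p8 (n : nat) (M : 'M[bool]_n) :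
  bool_primitive M -> is_bool_rank M 2 ->
  (is_scrambling_index M 2 <->
   exists (A : 'M[bool]_(n, 2)) (B : 'M[bool]_(2, n)),
     M = bmul A B /\
     (bmul B A = W2 \/ bmul B A = J2) /\
     (exists i : 'I_n, row i A = e2t 1) /\
     (exists i : 'I_n, row i A = e2t 2) /\
     (forall j : 'I_n, col j B <> e2sum)).
Proof.
move=> prim [[A [B EM]] _]; split.
- move=> [_ [sc2 nsc]].
  have nsc1 : ~ scrambling_at M 1 by apply: nsc.
  case: (boolP [exists i, exists j, [forall l, ~~ (M i l && M j l)]]);
    last first.
    move=> nb; exfalso; apply: nsc1 => i j; rewrite bpow1.
    move: nb; rewrite negb_exists => /forallP/(_ i); rewrite negb_exists => /forallP/(_ j).
    by rewrite negb_forall => /existsP[l]; rewrite negbK => h; exists l.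
  move=> /existsP[i0 /existsP[j0 /forallP dis]].
  have nz : forall i, exists k, M i k.
    move=> i; have [l] := sc2 i i; rewrite bpow2 bmulE andbb => /existsP[k /andP[h _]].
    by exists k.
  have [k1 m1] := nz i0; have [k2 m2] := nz j0.
  have [A' [B' G]] := step0 EM dis m1 m2.
  have [p /andP[cp0 cp1]] := step1 G sc2.
  case: (I2 p) cp0 cp1 => -> c0 c1.
  + exact: (final G c0 c1 (step2 G prim c0)).
  + have G' := good_sw G.
    have c0' : bmul (swB B') (swA A') o0 o0 by rewrite sw_mul' rev0.
    have c1' : bmul (swB B') (swA A') o1 o0 by rewrite sw_mul' rev0 rev1.
    have c2 := step2 G' prim c0'.
    exact: (final G' c0' c1' c2).
- move=> [A1 [B1 [EM1 [HC [[i0 Hi0] [[j0 Hj0] Hcol]]]]]].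
  have r0 := congr1 (fun v : 'rV[bool]_2 => v ord0 o0) Hi0.
  have r1 := congr1 (fun v : 'rV[bool]_2 => v ord0 o1) Hi0.
  have s0 := congr1 (fun v : 'rV[bool]_2 => v ord0 o0) Hj0.
  have s1 := congr1 (fun v : 'rV[bool]_2 => v ord0 o1) Hj0.
  rewrite /= !mxE /= in r0 r1 s0 s1.
  have c00 : bmul B1 A1 o0 o0 by case: HC => ->; rewrite mxE.
  have c10 : bmul B1 A1 o1 o0 by case: HC => ->; rewrite mxE.
  have dis : forall l, ~~ (B1 o0 l && B1 o1 l).
    move=> l; apply/negP => /andP[x y]; apply: (Hcol l); apply/matrixP => i j.
    by rewrite (ord1 j); case: (I2 i) => ->; rewrite !mxE /=.
  have R : forall i l, A1 i o0 && ~~ A1 i o1 -> M i l = B1 o0 l.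
    by move=> i l /andP[a b]; rewrite EM1 bmulE ex2 a (negbTE b) orbF.
  have R' : forall i l, ~~ A1 i o0 && A1 i o1 -> M i l = B1 o1 l.
    by move=> i l /andP[a b]; rewrite EM1 bmulE ex2 b (negbTE a).
  have ne : i0 != j0 by apply: contraTneq r0 => ->; rewrite s0.
  have nz := prim_row ne prim.
  have [l0] := nz i0; rewrite (R _ _ (introT andP (conj r0 (negbT r1)))) => hl0.
  split => //; split.
    move=> i1 j1; exists l0.
    suff h : forall i, bpow M 2 i l0 by rewrite !h.
    move=> i; have [m hm] := nz i; rewrite bpow2 bmulE.
    have : bmul A1 B1 i m by rewrite -EM1.
    rewrite bmulE => /existsP[q /andP[hq1 hq2]].
    have cq : bmul B1 A1 q o0 by case: (I2 q) => ->.
    move: cq; rewrite bmulE => /existsP[r /andP[hr1 hr2]].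
    apply/existsP; exists r; rewrite !EM1 !bmulE; apply/andP; split; apply/existsP.
    + by exists q; rewrite hq1 hr1.
    + by exists o0; rewrite hr2 hl0.
  move=> [|[|k]] // _ _ /(_ i0 j0) [l].
  rewrite bpow1 (R _ _ (introT andP (conj r0 (negbT r1)))) (R' _ _ (introT andP (conj (negbT s0) s1))).
  by apply/negP; apply: dis.
Qed.
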